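(* Let $1<n\leq m$ and let $v\in Z_{n,m}$ with $\sum_{i\in I_c(v)}v_i=n$. Then $d(v,0)\leq\sum_{i=1}^{p_l(v)}i+\sum_{i=1}^{m-p_r(v)}i+\lfloor\frac{n(m+1)}{2}\rfloor$.
   Context: Elements of $\mathbb{Z}_n$ are identified with representatives in $\{0,\dots,n-1\}$ (so $v_0,v_{m+1}$ are such integers in sums). $Z_{n,m}$ has vertices $u=(u_0,\dots,u_{m+1})\in\mathbb{Z}_n\times\{-1,0,1\}^m\times\mathbb{Z}_n$ with $\sum u_i\equiv0\pmod n$; $u,v$ adjacent if there is $0\leq i\leq m$ with $u_j=v_j$ for $j\notin\{i,i+1\}$ and either ($u_i=v_i+1$, $u_{i+1}=v_{i+1}-1$) or ($u_i=v_i-1$, $u_{i+1}=v_{i+1}+1$), arithmetic in coordinates $0,m+1$ in $\mathbb{Z}_n$. $d$ is graph distance, $0$ the all-zero vertex. $\operatorname{Piv}(v)$ is the set of integers $-1\le p\le m+1$ with $n\mid\sum_{i=0}^pv_i$ (empty sum $0$). $p_l(v)=\max\{p\in\operatorname{Piv}(v):p<\frac m2\}$, $p_r(v)=\min\{p\in\operatorname{Piv}(v):p\ge\frac m2\}$, $I_c(v)=\{p_l(v)+1,\dots,p_r(v)\}$. Sums $\sum_{i=1}^k i$ with $k\le0$ are $0$. *)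

(* Defs.v *)
From mathcomp Require Import all_boot all_order all_algebra.
Set Implicit Arguments. Unset Strict Implicit. Unset Printing Implicit Defensive.
Import Order.TTheory GRing.Theory Num.Theory.
Local Open Scope ring_scope.

(* A vertex u = (u_0,...,u_{m+1}) of Z_{n,m} is encoded as a sequence of
   integers of size m+2; u_0, u_{m+1} are the representatives in {0,..,n-1}. *)
Definition coord (u : seq int) (i : nat) : int := nth 0 u i.

Definition is_vertex (n m : nat) (u : seq int) : bool :=
  [&& size u == m.+2,
      (0 <= coord u 0) && (coord u 0 < n%:Z),
      (0 <= coord u m.+1) && (coord u m.+1 < n%:Z),
      [forall i : 'I_m.+2, ((0 < i)%N && (i <= m)%N) ==>
          (coord u i \in [:: -1; 0; 1])]
    & (n%:Z %| \sum_(i < m.+2) coord u i)%Z].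

Definition ceq (n m : nat) (j : nat) (a b : int) : bool :=
  if (j == 0%N) || (j == m.+1) then (a == b %[mod n%:Z])%Z else a == b.

Definition adj (n m : nat) (u v : seq int) : bool :=
  [&& is_vertex n m u, is_vertex n m v &
   [exists i : 'I_m.+1,
     [forall j : 'I_m.+2, ((j != i :> nat) && (j != i.+1 :> nat)) ==>
                            (coord u j == coord v j)] &&
     ((ceq n m i (coord u i) (coord v i + 1) &&
       ceq n m i.+1 (coord u i.+1) (coord v i.+1 - 1)) ||
      (ceq n m i (coord u i) (coord v i - 1) &&
       ceq n m i.+1 (coord u i.+1) (coord v i.+1 + 1)))]].

Fixpoint dist_le (n m : nat) (u w : seq int) (k : nat) : Prop :=
  match k with
  | 0%N => u = w
  | k'.+1 => u = w \/ exists x, adj n m u x /\ dist_le n m x w k'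
  end.

Definition zero_vertex (m : nat) : seq int := nseq m.+2 0.

(* partial sum v_0 + ... + v_p, with p : int, p >= -1 (empty sum for p = -1) *)
Definition psum (v : seq int) (p : int) : int :=
  \sum_(i < absz (p + 1)) coord v i.

Definition piv (n m : nat) (v : seq int) (p : int) : bool :=
  [&& -1 <= p, p <= m.+1%:Z & (n%:Z %| psum v p)%Z].

(* p_l(v) = max { p in Piv(v) : p < m/2 }.  Candidates are p = q - 1 with
   q < m+3; p = -1 (q = 0) always qualifies, so the default 0 of the nat
   \max is harmless. *)
Definition pl_cand (n m : nat) (v : seq int) (q : nat) : bool :=
  piv n m v (q%:Z - 1) && (2%:R * (q%:Z - 1) < m%:Z).
Definition p_l (n m : nat) (v : seq int) : int :=
  (\max_(q < m.+3 | pl_cand n m v q) q)%N%:Z - 1.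

(* p_r(v) = min { p in Piv(v) : p >= m/2 }: the first q in 0,1,...,m+2 such
   that p = q - 1 qualifies (for a vertex, p = m+1 always qualifies). *)
Definition p_r (n m : nat) (v : seq int) : int :=
  (find (fun q : nat => piv n m v (q%:Z - 1) && (m%:Z <= 2%:R * (q%:Z - 1)))
        (iota 0 m.+3))%:Z - 1.

Definition sum_Ic (n m : nat) (v : seq int) : int :=
  \sum_(i < m.+2 | (p_l n m v < i%:Z) && (i%:Z <= p_r n m v)) coord v i.

Definition tri (k : int) : nat :=
  if k is Posz k' then (\sum_(1 <= i < k'.+1) i)%N else 0%N.

(* Main.v *)
Require Import Defs.
From mathcomp Require Import all_boot all_order all_algebra zify ring.
Import Order.TTheory GRing.Theory Num.Theory.
Local Open Scope ring_scope.
Set Implicit Arguments. Unset Strict Implicit.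

Definition T (u : seq int) (k : nat) : int := \sum_(i < k) Defs.coord u i.
Definition Phi (m : nat) (u : seq int) (c : int) : nat :=
  (\sum_(p < m.+1) absz (T u p.+1 - c))%N.

Lemma T_S u k : T u k.+1 = T u k + Defs.coord u k.
Proof. by rewrite /T big_ord_recr. Qed.

Lemma T0 u : T u 0 = 0.
Proof. by rewrite /T big_ord0. Qed.

Lemma mem3 (x : int) : (x \in [:: -1; 0; 1]) = (-1 <= x <= 1).
Proof. rewrite !inE; apply/idP/idP; lia. Qed.

Lemma vert_size n m u : is_vertex n m u -> size u = m.+2.
Proof. by case/and5P => /eqP. Qed.

Lemma vert_0 n m u : is_vertex n m u -> 0 <= Defs.coord u 0 < n%:Z.
Proof. by case/and5P. Qed.

Lemma vert_last n m u : is_vertex n m u -> 0 <= Defs.coord u m.+1 < n%:Z.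
Proof. by case/and5P. Qed.

Lemma vert_sum n m u : is_vertex n m u -> (n%:Z %| T u m.+2)%Z.
Proof. by case/and5P. Qed.

Lemma vert_mid n m u j : is_vertex n m u -> (0 < j <= m)%N -> -1 <= Defs.coord u j <= 1.
Proof.
case/and5P => _ _ _ /forallP H _ hj.
have hj2 : (j < m.+2)%N by lia.
have := H (Ordinal hj2); rewrite /= hj /= mem3; exact.
Qed.

Lemma dvdz_small (n : nat) (x : int) : (n%:Z %| x)%Z -> 0 <= x < n%:Z -> x = 0.
Proof. move=> /dvdz_mod0P H hx; by rewrite -(modz_small hx). Qed.

Lemma dist_le_mono n m u w k k' : dist_le n m u w k -> (k <= k')%N -> dist_le n m u w k'.
Proof.
elim: k' u k => [|k' IH] u [|k] /=.
- by [].
- by [].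
- by move=> ->; left.
- case=> [->|[x [hx hd]]] hk; first by left.
  right; exists x; split => //; exact: (IH x k).
Qed.


Definition nrm (n m j : nat) (a : int) : int :=
  if (j == 0)%N || (j == m.+1)%N then (a %% n%:Z)%Z else a.
Definition mvf n m u i (e : int) (j : nat) : int :=
  if j == i then nrm n m j (Defs.coord u j - e)
  else if j == i.+1 then nrm n m j (Defs.coord u j + e) else Defs.coord u j.
Definition mv n m u i e : seq int := mkseq (mvf n m u i e) m.+2.

Lemma coord_mv n m u i e j : (j < m.+2)%N -> Defs.coord (mv n m u i e) j = mvf n m u i e j.
Proof. move=> hj; by rewrite /Defs.coord /mv nth_mkseq. Qed.

Lemma nrm_dvd n m j a : (n%:Z %| nrm n m j a - a)%Z.
Proof.
rewrite /nrm; case: ifP => _; last by rewrite subrr dvdz0.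
have -> : ((a %% n%:Z)%Z - a) = - ((a %/ n%:Z)%Z * n%:Z).
  by rewrite {2}(divz_eq a n%:Z) opprD addrCA subrr addr0.
by rewrite rpredN; apply: dvdz_mull; exact: dvdzz.
Qed.

Lemma ceq_nrm1 n m j a e : ceq n m j a (nrm n m j (a - e) + e).
Proof.
rewrite /ceq /nrm; case: (_ || _) => /=; last by rewrite subrK.
by rewrite modzDml subrK.
Qed.

Lemma ceq_nrm2 n m j a e : ceq n m j a (nrm n m j (a + e) - e).
Proof.
rewrite /ceq /nrm; case: (_ || _) => /=; last by rewrite addrK.
by rewrite modzDml addrK.
Qed.

Ltac ifs := repeat match goal with |- context[if ?b then _ else _] =>
  let H := fresh "H" in case H: b end.

Lemma T_mv n m u i e k : (k <= m.+2)%N ->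
  T (mv n m u i e) k = T u k
    + (if (i < k)%N then nrm n m i (Defs.coord u i - e) - Defs.coord u i else 0)
    + (if (i.+1 < k)%N then nrm n m i.+1 (Defs.coord u i.+1 + e) - Defs.coord u i.+1 else 0).
Proof.
elim: k => [|k IH] hk; first by rewrite !T0.
rewrite T_S IH ?(ltnW hk) // T_S coord_mv // /mvf.
case E1: (k == i); [move/eqP: E1 => E1; subst k|].
  by ifs; try lia.
case E2: (k == i.+1); [move/eqP: E2 => E2; subst k|].
  by ifs; try lia.
by ifs; try lia.
Qed.

Lemma modz_rng (n : nat) (a : int) : (0 < n)%N -> 0 <= (a %% n%:Z)%Z < n%:Z.
Proof.
move=> hn; rewrite modz_ge0 ?ltz_pmod //; lia.
Qed.

Lemma mv_vertex n m u i e : (1 < n)%N -> is_vertex n m u -> (i <= m)%N ->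
  ((0 < i)%N -> -1 <= Defs.coord u i - e <= 1) ->
  ((i.+1 <= m)%N -> -1 <= Defs.coord u i.+1 + e <= 1) ->
  is_vertex n m (mv n m u i e).
Proof.
move=> hn hu hi H1 H2.
have hn0 : (0 < n)%N by lia.
apply/and5P; split.
- by rewrite size_mkseq.
- rewrite coord_mv // /mvf /nrm eqxx orTb.
  case: (0 == i)%N; first exact: modz_rng.
  rewrite (_ : (0 == i.+1)%N = false) //. exact: (vert_0 hu).
- rewrite coord_mv // /mvf /nrm eqxx orbT.
  have -> : (m.+1 == i) = false by apply/eqP; lia.
  case: (m.+1 == i.+1); first exact: modz_rng.
  exact: (vert_last hu).
- apply/forallP => j; apply/implyP => hj.
  rewrite coord_mv // mem3 /mvf /nrm.
  have -> : (((j:nat) == 0%N) || ((j:nat) == m.+1)) = false by apply/negbTE; lia.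
  case E1: (j == i :> nat).
    by move/eqP: E1 => E1; subst; apply: H1; lia.
  case E2: (j == i.+1 :> nat).
    by move/eqP: E2 => E2; rewrite E2; apply: H2; lia.
  exact: (vert_mid hu).
- rewrite -/(T _ m.+2) T_mv // ifT ?ifT; try lia.
  have -> : forall (t a b c d : int), t + (a - b) + (c - d) = t + (a - (b - e)) + (c - (d + e)) - e + e.
    by move=> *; rewrite subrK; ring.
  rewrite subrK; apply: rpredD; first apply: rpredD.
  + exact: (vert_sum hu).
  + exact: nrm_dvd.
  + exact: nrm_dvd.
Qed.

Lemma mv_adj n m u i e : (1 < n)%N -> is_vertex n m u -> (i <= m)%N ->
  (e = 1 \/ e = -1) ->
  ((0 < i)%N -> -1 <= Defs.coord u i - e <= 1) ->
  ((i.+1 <= m)%N -> -1 <= Defs.coord u i.+1 + e <= 1) ->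
  adj n m u (mv n m u i e).
Proof.
move=> hn hu hi he H1 H2.
apply/and3P; split => //; first exact: mv_vertex.
have hi' : (i < m.+1)%N by [].
apply/existsP; exists (Ordinal hi'); apply/andP; split.
  apply/forallP => j; apply/implyP => /andP [hj1 hj2].
  rewrite coord_mv // /mvf /= (negbTE hj1) (negbTE hj2) //.
have hi2 : (i < m.+2)%N by lia.
have hi3 : (i.+1 < m.+2)%N by lia.
change (nat_of_ord (Ordinal hi')) with i.
rewrite !coord_mv // /mvf eqxx (_ : (i.+1 == i) = false); last by apply/eqP; lia.
rewrite eqxx.
case: he => ->; apply/orP; [left|right]; apply/andP; split.
- exact: ceq_nrm1.
- exact: ceq_nrm2.
- rewrite opprK; exact: ceq_nrm2.
- exact: ceq_nrm1.
Qed.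

Lemma mv_T n m u i e : (1 < n)%N -> is_vertex n m u -> (i <= m)%N ->
  exists t : int, (n%:Z %| t)%Z /\ forall p, (p <= m)%N ->
    T (mv n m u i e) p.+1 = T u p.+1 + t - (if p == i then e else 0).
Proof.
move=> hn hu hi.
exists (if i == 0%N then nrm n m i (Defs.coord u i - e) - (Defs.coord u i - e) else 0).
split.
  case: (i == 0%N); [exact: nrm_dvd | exact: dvdz0].
move=> p hp; rewrite T_mv //; last by lia.
have E2 : (i.+1 < p.+1)%N -> nrm n m i.+1 (Defs.coord u i.+1 + e) = Defs.coord u i.+1 + e.
  by move=> h; rewrite /nrm (_ : (_ || _) = false) //; apply/negbTE; lia.
have E1 : (i != 0%N) -> nrm n m i (Defs.coord u i - e) = Defs.coord u i - e.
  by move=> h; rewrite /nrm (_ : (_ || _) = false) //; apply/negbTE; lia.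
case Hi0: (i == 0%N).
  move/eqP: Hi0 => Hi0; subst i.
  by ifs; try lia.
rewrite E1 ?Hi0 //.
by ifs; try lia.
Qed.


Lemma argmax (f : nat -> int) N : exists i, (i <= N)%N /\ forall j, (j <= N)%N -> f j <= f i.
Proof.
elim: N => [|N [i [hi H]]].
  by exists 0%N; split => // j; rewrite leqn0 => /eqP ->.
case: (lerP (f N.+1) (f i)) => h.
  exists i; split; first lia.
  move=> j; rewrite leq_eqVlt => /orP [/eqP ->//|hj]; apply: H; lia.
exists N.+1; split => // j; rewrite leq_eqVlt => /orP [/eqP ->//|hj].
have := H j; lia.
Qed.

Lemma Phi_D1 m u c i (hi : (i < m.+1)%N) :
  Phi m u c = (absz (T u i.+1 - c) +
    \sum_(p < m.+1 | p != Ordinal hi) absz (T u p.+1 - c))%N.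
Proof. by rewrite /Phi (bigD1 (Ordinal hi)). Qed.

Lemma step n m u c k : (1 < n)%N -> is_vertex n m u -> (n%:Z %| c)%Z ->
  Phi m u c = k.+1 ->
  exists x c', adj n m u x /\ (n%:Z %| c')%Z /\ Phi m x c' = k.
Proof.
move=> hn hu hc hP.
set f := fun p => T u p.+1.
have [p0 [hp0 hne]] : exists p0, (p0 <= m)%N /\ f p0 != c.
  case/boolP: [exists p : 'I_m.+1, T u p.+1 != c].
    by case/existsP => p hp; exists p; split => //; rewrite -ltnS.
  rewrite negb_exists => /forallP H.
  move: hP; rewrite /Phi big1 // => p _.
  by have := H p; rewrite negbK => /eqP ->; rewrite subrr.
have key : forall i e, (i <= m)%N -> (e = 1 \/ e = -1) ->
    ((0 < i)%N -> -1 <= Defs.coord u i - e <= 1) ->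
    ((i.+1 <= m)%N -> -1 <= Defs.coord u i.+1 + e <= 1) ->
    1 <= (f i - c) * e ->
    exists x c', adj n m u x /\ (n%:Z %| c')%Z /\ Phi m x c' = k.
  move=> i e hi he H1 H2 hs.
  exists (mv n m u i e).
  have [t [ht HT]] := mv_T e hn hu hi.
  exists (c + t); split; first exact: mv_adj.
  split; first exact: rpredD.
  have hi1 : (i < m.+1)%N by [].
  have E : Phi m (mv n m u i e) (c + t) =
     (\sum_(p < m.+1) absz ((T u p.+1 - c - (if p == i :> nat then e else 0))%R))%N.
    rewrite /Phi; apply: eq_bigr => p _; rewrite HT; last by rewrite -ltnS.
    congr absz; ring.
  rewrite E (bigD1 (Ordinal hi1)) //= eqxx.
  rewrite (eq_bigr (fun p : 'I_m.+1 => absz ((T u p.+1 - c)%R))); last first.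
    move=> p hp; rewrite (_ : (p == i :> nat) = false) ?subr0 //.
    by apply/negbTE; move: hp; apply: contra => /eqP hp; apply/eqP; apply: val_inj.
  move: hP; rewrite (@Phi_D1 m u c i hi1).
  rewrite /f in hs; set S := (\sum_(p < m.+1 | _) _)%N; case: he hs => -> hs; lia.
have [i [hi Hmax]] := argmax f m.
have Tdiff : forall j, (j < m)%N -> Defs.coord u j.+1 = f j.+1 - f j.
  by move=> j hj; rewrite /f T_S; ring.
case: (ltrP c (f i)) => hci.
  apply: (key i 1) => //; [by left| | |].
  - move=> h; have [i' Ei] : exists i', i = i'.+1 by exists i.-1; lia.
    rewrite Ei in hi Hmax hci h *.
    have := vert_mid hu (_ : (0 < i'.+1 <= m)%N); have := Tdiff i'; have := Hmax i'.
    lia.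
  - move=> h; have := vert_mid hu (_ : (0 < i.+1 <= m)%N); have := Tdiff i; have := Hmax i.+1.
    lia.
  - lia.
have [j [hj Hmin]] := argmax (fun p => - f p) m.
have hjc : f j < c.
  have h1 := Hmin p0 hp0; have h2 := Hmax p0 hp0; simpl in h1; lia.
apply: (key j (-1)) => //; [by right| | |].
- move=> h; have [j' Ej] : exists j', j = j'.+1 by exists j.-1; lia.
  rewrite Ej in hj Hmin hjc h *.
  have := vert_mid hu (_ : (0 < j'.+1 <= m)%N); have := Tdiff j'; have := Hmin j'.
  lia.
- move=> h; have := vert_mid hu (_ : (0 < j.+1 <= m)%N); have := Tdiff j; have := Hmin j.+1.
  lia.
- lia.
Qed.

Lemma phi_zero n m u c : (1 < n)%N -> is_vertex n m u -> (n%:Z %| c)%Z ->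
  Phi m u c = 0%N -> u = zero_vertex m.
Proof.
move=> hn hu hc hP.
have HT : forall p, (p <= m)%N -> T u p.+1 = c.
  move=> p hp; have hp1 : (p < m.+1)%N by [].
  move: hP; rewrite (@Phi_D1 m u c p hp1); lia.
have c0 : c = 0.
  apply: (dvdz_small hc); rewrite -(HT 0%N) // T_S T0 add0r; exact: (vert_0 hu).
have Hmid : forall j, (0 < j <= m)%N -> Defs.coord u j = 0.
  move=> j hj; have := HT j; have := HT j.-1; rewrite (_ : j.-1.+1 = j); last by lia.
  rewrite T_S; lia.
have Hlast : Defs.coord u m.+1 = 0.
  apply: (dvdz_small (n := n)); last exact: (vert_last hu).
  have -> : Defs.coord u m.+1 = T u m.+2 - c by rewrite T_S HT // addrC addKr.
  apply: rpredB => //; exact: (vert_sum hu).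
apply: (@eq_from_nth _ 0); first by rewrite (vert_size hu) size_nseq.
move=> j; rewrite (vert_size hu) => hj; rewrite nth_nseq hj.
have := Hmid j; rewrite /Defs.coord.
case: j hj => [|j] hj.
  by move=> _; have := HT 0%N (leq0n _); rewrite T_S T0 add0r c0 /Defs.coord.
case: (ltnP j m) => hjm; first by apply; lia.
have -> : j = m by lia.
by move=> _; move: Hlast; rewrite /Defs.coord.
Qed.

Lemma dist_phi n m k : (1 < n)%N -> forall u c, is_vertex n m u -> (n%:Z %| c)%Z ->
  Phi m u c = k -> dist_le n m u (zero_vertex m) k.
Proof.
move=> hn; elim: k => [|k IH] u c hu hc hP /=.
  exact: (phi_zero hn hu hc).
right; have [x [c' [hx [hc' hP']]]] := step hn hu hc hP.
exists x; split => //; apply: (IH x c') => //.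
by case/and3P: hx.
Qed.


Lemma lip n m u i d : is_vertex n m u -> (i + d <= m)%N ->
  - (d%:Z) <= T u (i + d)%N.+1 - T u i.+1 <= d%:Z.
Proof.
move=> hu; elim: d => [|d IH] h; first by rewrite ?addn0 subrr; lia.
have hd : (i + d <= m)%N by lia.
have h1 := IH hd.
rewrite addnS T_S.
have hd2 : (0 < (i + d).+1 <= m)%N by lia.
have h2 := vert_mid hu hd2.
lia.
Qed.

Lemma ivt (f : nat -> int) lo d t :
  (forall j, (lo <= j < lo + d)%N -> -1 <= f j.+1 - f j <= 1) ->
  f lo <= t <= f (lo + d)%N -> exists j, (lo <= j <= lo + d)%N /\ f j = t.
Proof.
elim: d t => [|d IH] t H ht.
  exists lo; split; first lia; move: ht; rewrite ?addn0; lia.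
case: (lerP t (f (lo + d)%N)) => h.
  have H' : forall j, (lo <= j < lo + d)%N -> -1 <= f j.+1 - f j <= 1.
    move=> j hj; apply: H; lia.
  have ht' : f lo <= t <= f (lo + d)%N by lia.
  have [j [hj fj]] := IH t H' ht'.
  exists j; split => //; lia.
exists (lo + d.+1)%N; split; first lia.
have hj : (lo <= lo + d < lo + d.+1)%N by lia.
have := H (lo + d)%N hj; rewrite addnS in ht *; lia.
Qed.

Lemma sumA N k : (k <= N)%N -> (\sum_(p < N) (k - p))%N = (\sum_(1 <= i < k.+1) i)%N.
Proof.
elim: k N => [|k IH] N hk.
  by rewrite big1 ?big_geq.
case: N hk => [|N] hk; first by [].
rewrite big_ord_recl big_nat_recr //= subn0 addnC.
congr (_ + _)%N; rewrite -(IH N) //; apply: eq_bigr => p _.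
Qed.

Lemma sumB N R : (\sum_(p < N.+1) (p - R))%N = (\sum_(1 <= i < (N - R).+1) i)%N.
Proof.
rewrite -(big_mkord xpredT (fun p => p - R)%N) big_rev_mkord subn0 -(sumA (N := N.+1)); last lia.
apply: eq_bigr => p _; lia.
Qed.

Lemma sum_range u N L H : (L <= H <= N)%N ->
  \sum_(i < N | (L <= i < H)%N) Defs.coord u i = T u H - T u L.
Proof.
move=> hLH.
rewrite /T (big_ord_widen N (Defs.coord u) (_ : (H <= N)%N)) ?(big_ord_widen N (Defs.coord u) (_ : (L <= N)%N)); try lia.
rewrite [LHS]big_mkcond [X in X - _]big_mkcond [X in _ - X]big_mkcond -sumrB; apply: eq_bigr => i _.
by ifs; try lia; rewrite ?subrr ?subr0.
Qed.


Lemma psumE v k : psum v (k%:Z - 1) = T v k.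
Proof. by rewrite /psum subrK. Qed.

Lemma pivE n m v k : piv n m v (k%:Z - 1) = [&& -1 <= k%:Z - 1, k%:Z - 1 <= m.+1%:Z & (n%:Z %| T v k)%Z].
Proof. by rewrite /piv psumE. Qed.

Lemma pl_cand0 n m v : pl_cand n m v 0.
Proof. rewrite /pl_cand pivE /T big_ord0 dvdz0 andbT. lia. Qed.

Lemma L_spec n m v : let L := (\max_(q < m.+3 | pl_cand n m v q) q)%N in
  pl_cand n m v L /\ forall q, (q < m.+3)%N -> pl_cand n m v q -> (q <= L)%N.
Proof.
move=> L; split.
  rewrite /L; apply: (big_ind (pl_cand n m v)) => //; first exact: pl_cand0.
  by move=> x y hx hy; rewrite /maxn; case: ifP.
move=> q hq hc; exact: (@leq_bigmax_cond _ (fun q : 'I_m.+3 => pl_cand n m v q) (fun q => nat_of_ord q) (Ordinal hq)).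
Qed.

Definition Pr n m v := (fun q : nat => piv n m v (q%:Z - 1) && (m%:Z <= 2%:R * (q%:Z - 1))).

Lemma R_spec n m v : is_vertex n m v ->
  let R' := find (Pr n m v) (iota 0 m.+3) in
  [/\ (R' < m.+3)%N, Pr n m v R' & forall q, (q < R')%N -> ~~ Pr n m v q].
Proof.
move=> hv R'.
have hasP : has (Pr n m v) (iota 0 m.+3).
  apply/hasP; exists m.+2; first by rewrite mem_iota; lia.
  rewrite /Pr pivE (vert_sum hv) andbT; lia.
have hR' : (R' < m.+3)%N by have := hasP; rewrite has_find size_iota.
split => //.
- by have := nth_find 0 hasP; rewrite -/R' nth_iota ?add0n.
- by move=> q hq; have := before_find 0 hq; rewrite nth_iota ?add0n ?(ltn_trans hq) // => ->.
Qed.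


Lemma triA m L : (L%:Z - 1 <= m.+1%:Z) ->
  tri (L%:Z - 1) = (\sum_(p < m.+1) (L.-1 - p))%N.
Proof.
case: L => [|k] h.
  by rewrite big1 // => p _; rewrite sub0n.
rewrite (_ : k.+1%:Z - 1 = k%:Z); last by lia.
rewrite /tri sumA //=; lia.
Qed.

Lemma triB m R : (R <= m.+1)%N ->
  tri (m%:Z - (R.+1%:Z - 1)) = (\sum_(p < m.+1) (p - R))%N.
Proof.
move=> h; rewrite sumB.
case: (leqP R m) => hR.
  by rewrite (_ : m%:Z - (R.+1%:Z - 1) = (m - R)%N%:Z) //; lia.
rewrite (_ : (m - R)%N = 0%N); last by lia.
rewrite big_geq // (_ : m%:Z - (R.+1%:Z - 1) = -1) //; lia.
Qed.

Unset Implicit Arguments.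

Theorem lemma5p25 (n m : nat) (v : seq int) :
  (1 < n)%N -> (n <= m)%N -> is_vertex n m v ->
  sum_Ic n m v = n%:Z ->
  dist_le n m v (zero_vertex m)
    (tri (p_l n m v) + tri (m%:Z - p_r n m v) + (n * m.+1) %/ 2)%N.
Proof.
move=> hn hnm hv hIc.
have [hLc hLmax] := L_spec n m v.
set L := (\max_(q < m.+3 | pl_cand n m v q) q)%N in hLc hLmax.
have plE : p_l n m v = L%:Z - 1 by [].
have [hR'lt hRP hRmin] := R_spec hv.
set R' := find (Pr n m v) (iota 0 m.+3) in hR'lt hRP hRmin.
have prE : p_r n m v = R'%:Z - 1 by [].
move: hLc; rewrite /pl_cand pivE => /andP [/and3P [_ hL1 hLdv] hL2].
move: hRP; rewrite /Pr pivE => /andP [/and3P [_ hR1 hRdv] hR2].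
have [R ER] : exists R, R' = R.+1 by exists R'.-1; lia.
rewrite ER in hR'lt hR1 hRdv hR2 hRmin prE.
set a := T v L in hLdv.
set b := T v R.+1 in hRdv.
have hLR : (L <= R)%N by lia.
have hba : b = a + n%:Z.
  move: hIc; rewrite /sum_Ic plE prE.
  rewrite (eq_bigl (fun i : 'I_m.+2 => (L <= i < R.+1)%N)); last by move=> i /=; lia.
  rewrite sum_range; [rewrite -/a -/b; lia | lia].
have nopiv : forall k, (L < k < R.+1)%N -> (n%:Z %| T v k)%Z -> False.
  move=> k hk hdv.
  case: (ltrP (2%:R * (k%:Z - 1)) m%:Z) => h2.
    have hkc : pl_cand n m v k by rewrite /pl_cand pivE hdv h2 andbT; lia.
    have := hLmax k (_ : (k < m.+3)%N) hkc; lia.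
  have := hRmin k (_ : (k < R.+1)%N); rewrite /Pr pivE hdv h2 andbT.
  lia.
set f := fun p => T v p.+1.
have step1 : forall j, (j < m)%N -> -1 <= f j.+1 - f j <= 1.
  move=> j hj; rewrite /f T_S addrAC subrr add0r; apply: (vert_mid hv); lia.
have hfL : (0 < L)%N -> f L.-1 = a by move=> h; rewrite /f prednK.
have hfR : (R <= m)%N -> f R = b by [].
have mid : forall p, (L <= p < R)%N -> a < f p < a + n%:Z.
  move=> p hp; apply/andP; split.
    case: (ltrP a (f p)) => // hle; exfalso.
    have [hi [hhi1 hhi2 hhi3 hhi]] : exists hi, [/\ (p <= hi)%N, (hi <= R)%N, (hi <= m)%N & a < f hi].
      case: (leqP R m) => hRm.
        exists R; split => //; try lia; rewrite hfR //; lia.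
      exists m; split; try lia.
      have ER' : R = m.+1 by lia.
      have := vert_last hv; move: hba; rewrite /b ER' T_S /f; lia.
    have H1 : forall j, (p <= j < p + (hi - p))%N -> -1 <= f j.+1 - f j <= 1.
      move=> j hj; apply: step1; lia.
    have H2 : f p <= a <= f (p + (hi - p))%N by rewrite subnKC //; lia.
    have [j [hj fj]] := ivt H1 H2.
    apply: (nopiv j.+1); last by rewrite -/(f j) fj.
    have : j != R; last lia.
    apply/eqP => ejR; move: fj; rewrite ejR hfR; [lia | lia].
  case: (ltrP (f p) (a + n%:Z)) => // hge; exfalso.
  have hlo : f L.-1 < a + n%:Z.
    case: (posnP L) => hL0; last by rewrite hfL //; lia.
    rewrite /a /f hL0 -[0.-1]/0%N T_S !T0 !add0r; have := vert_0 hv; lia.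
  have H1 : forall j, (L.-1 <= j < L.-1 + (p - L.-1))%N -> -1 <= f j.+1 - f j <= 1.
    move=> j hj; apply: step1; lia.
  have H2 : f L.-1 <= (a + n%:Z) <= f (L.-1 + (p - L.-1))%N.
    rewrite subnKC; [lia | lia].
  have [j [hj fj]] := ivt H1 H2.
  apply: (nopiv j.+1); last by rewrite -/(f j) fj; apply: rpredD => //; exact: dvdzz.
  have : (0 < L)%N -> j != L.-1; last lia.
  move=> hL0; apply/eqP => ejL; move: fj; rewrite ejL hfL //; lia.
have term : forall p, (p <= m)%N ->
    (absz (f p - a) + absz (f p - b) <= 2 * ((L.-1 - p) + (p - R)) + n)%N.
  move=> p hp.
  case: (ltnP p L) => h1.
    have hd : (p + (L.-1 - p) <= m)%N by lia.
    have := lip hv hd; rewrite (_ : (p + (L.-1 - p))%N = L.-1); last by lia.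
    rewrite prednK; last by lia.
    rewrite -/a /f; lia.
  case: (leqP R p) => h2.
    have hd : (R + (p - R) <= m)%N by lia.
    have := lip hv hd; rewrite (_ : (R + (p - R))%N = p); last by lia.
    rewrite -/b /f; lia.
  have hm : (L <= p < R)%N by lia.
  have := mid p hm; rewrite -/b hba; lia.
have hsum : (Phi m v a + Phi m v b <=
    2 * (\sum_(p < m.+1) (L.-1 - p) + \sum_(p < m.+1) (p - R)) + n * m.+1)%N.
  rewrite /Phi -big_split /=.
  apply: (@leq_trans (\sum_(p < m.+1) (2 * ((L.-1 - p) + (p - R)) + n))%N).
    apply: leq_sum => p _; have := term p (ltn_ord p); rewrite /f; exact.
  rewrite big_split /= -big_distrr /= big_split /= big_const_ord iter_addn_0.
  lia.
rewrite plE prE (triA hL1) (triB (_ : (R <= m.+1)%N)); last by lia.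
case: (leqP (Phi m v a) (Phi m v b)) => hab.
  apply: (dist_le_mono (dist_phi hn hv hLdv (erefl _))); lia.
apply: (dist_le_mono (dist_phi hn hv hRdv (erefl _))); lia.
Qed.
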